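(* Let $N\ge2$ and suppose there exists a robust Hadamard matrix of size $N$. Then every matrix belonging to any ray or any counter-ray of the Birkhoff polytope $\mathcal{B}_N$ is unistochastic. If moreover there exists a real robust Hadamard matrix of size $N$, then every such matrix is orthostochastic.
   Context: A bistochastic matrix is a real $N\times N$ matrix with nonnegative entries whose rows and columns each sum to 1; the set of them is the Birkhoff polytope $\mathcal{B}_N$. A bistochastic $B$ is unistochastic if there is a unitary $U\in U(N)$ with $B_{ij}=|U_{ij}|^2$ for all $i,j$, and orthostochastic if such $U$ can be chosen real orthogonal. $W_N$ denotes the $N\times N$ matrix with all entries $1/N$. For a permutation matrix $P$ of size $N$, the ray of $P$ is $\{\alpha P+(1-\alpha)W_N:\alpha\ge 0\}\cap\mathcal{B}_N$ and the counter-ray of $P$ is $\{\alpha P+(1-\alpha)W_N:\alpha\le 0\}\cap\mathcal{B}_N$. A (complex) Hadamard matrix of size $N$ is an $N\times N$ matrix $H$ with $|H_{ij}|=1$ and $HH^\dagger=N\mathbb{I}_N$; it is robust if for every $i\neq j$ the matrix $\begin{pmatrix}H_{ii}&H_{ij}\\ H_{ji}&H_{jj}\end{pmatrix}$ is a Hadamard matrix of size 2. *)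

(* Defs.v *)
From HB Require Import structures.
From mathcomp Require Import all_boot all_order all_algebra all_fingroup.
From mathcomp Require Import complex.
From mathcomp Require Import reals.
Set Implicit Arguments. Unset Strict Implicit. Unset Printing Implicit Defensive.
Import Order.TTheory GRing.Theory Num.Theory.
Local Open Scope ring_scope.
Local Open Scope complex_scope.

Section Defs.
Variable R : realType.

Definition bistochastic n (B : 'M[R]_n) : Prop :=
  (forall i j, 0 <= B i j) /\
  (forall i, \sum_j B i j = 1) /\
  (forall j, \sum_i B i j = 1).

Definition adjmx m n (U : 'M[R[i]]_(m, n)) : 'M[R[i]]_(n, m) :=
  \matrix_(i, j) (U j i)^*.

Definition unitary n (U : 'M[R[i]]_n) : Prop := U *m adjmx U = 1%:M.

Definition orthogonal n (O : 'M[R]_n) : Prop := O *m O^T = 1%:M.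

Definition unistochastic n (B : 'M[R]_n) : Prop :=
  bistochastic B /\
  exists U : 'M[R[i]]_n, unitary U /\
    forall i j, (B i j)%:C = `|U i j| ^+ 2.

Definition orthostochastic n (B : 'M[R]_n) : Prop :=
  bistochastic B /\
  exists O : 'M[R]_n, orthogonal O /\ forall i j, B i j = O i j ^+ 2.

Definition Wmx n : 'M[R]_n := \matrix_(i, j) (n%:R)^-1.

Definition hadamard n (H : 'M[R[i]]_n) : Prop :=
  (forall i j, `|H i j| = 1) /\ H *m adjmx H = (n%:R)%:M.

Definition sub2 n (H : 'M[R[i]]_n) (i j : 'I_n) : 'M[R[i]]_2 :=
  \matrix_(a < 2, b < 2)
     H (if a == 0 :> nat then i else j) (if b == 0 :> nat then i else j).

Definition robust_hadamard n (H : 'M[R[i]]_n) : Prop :=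
  hadamard H /\ forall i j : 'I_n, i != j -> hadamard (sub2 H i j).

Definition real_mx n (H : 'M[R[i]]_n) : Prop :=
  forall i j, exists x : R, H i j = x%:C.

Definition in_ray n (s : 'S_n) (B : 'M[R]_n) : Prop :=
  bistochastic B /\
  exists alpha : R, 0 <= alpha /\
    B = alpha *: (perm_mx s : 'M[R]_n) + (1 - alpha) *: Wmx n.

Definition in_counter_ray n (s : 'S_n) (B : 'M[R]_n) : Prop :=
  bistochastic B /\
  exists alpha : R, alpha <= 0 /\
    B = alpha *: (perm_mx s : 'M[R]_n) + (1 - alpha) *: Wmx n.

End Defs.

(* Main.v *)
Require Import Defs.
From HB Require Import structures.
From mathcomp Require Import all_boot all_order all_algebra all_fingroup.
From mathcomp Require Import complex reals.
From mathcomp Require Import ring lra.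
Import Order.TTheory GRing.Theory Num.Theory.
Local Open Scope ring_scope.

Section Core.
Variable R : realType.
Variable N : nat.
Variable H : 'M[R[i]]_N.
Hypothesis hH : robust_hadamard H.

Lemma cE (z : R[i]) : conjc z = Num.conj z. Proof. by []. Qed.

Lemma nconj1 (z : R[i]) : `|z| = 1 -> Num.conj z * z = 1.
Proof. by move=> h; rewrite mulrC -normCK h expr1n. Qed.

Definition K : 'M[R[i]]_N := \matrix_(a, b) (Num.conj (H a a) * H a b).

Lemma K_diag a : K a a = 1.
Proof. rewrite mxE; apply: nconj1; exact: hH.1.1. Qed.

Lemma K_norm a b : K a b * Num.conj (K a b) = 1.
Proof.
rewrite mxE rmorphM /= conjCK.
have e1 := nconj1 _ (hH.1.1 a a). have e2 := nconj1 _ (hH.1.1 a b).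
have -> : Num.conj (H a a) * H a b * (H a a * Num.conj (H a b)) = (Num.conj (H a a) * H a a) * (Num.conj (H a b) * H a b) by ring.
by rewrite e1 e2 mulr1.
Qed.

Lemma K_off a b : a != b -> K a b = - Num.conj (K b a).
Proof.
move=> nab.
have := hH.2 a b nab => -[_ hs].
have h := congr1 (fun M : 'M[R[i]]_2 => M 0 1) hs.
move: h; rewrite /= !mxE big_ord_recr big_ord_recr big_ord0 /= !mxE /= add0r mulr0n !cE => h.
have e1 := nconj1 _ (hH.1.1 a a). have e2 := nconj1 _ (hH.1.1 b b).
rewrite ?mxE rmorphM /= conjCK.
apply/eqP; rewrite -subr_eq0 opprK.
have <- : Num.conj (H a a) * H b b * (H a a * Num.conj (H b a) + H a b * Num.conj (H b b)) = Num.conj (H a a) * H a b + H b b * Num.conj (H b a).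
  have -> : Num.conj (H a a) * H b b * (H a a * Num.conj (H b a) + H a b * Num.conj (H b b)) = (Num.conj (H a a) * H a a) * (H b b * Num.conj (H b a)) + (Num.conj (H a a) * H a b) * (Num.conj (H b b) * H b b) by ring.
  by rewrite e1 e2 mul1r mulr1 addrC.
have -> : H a a * Num.conj (H b a) + H a b * Num.conj (H b b) = 0 := h.
by rewrite mulr0.
Qed.

Lemma KK a b : \sum_k K a k * Num.conj (K b k) = (N%:R : R[i]) *+ (a == b).
Proof.
have hh := congr1 (fun M : 'M[R[i]]_N => M a b) hH.1.2; move: hh; rewrite /= !mxE => hh.
under eq_bigr => k _ do rewrite !mxE rmorphM /= conjCK.
have -> : \sum_k Num.conj (H a a) * H a k * (H b b * Num.conj (H b k)) = Num.conj (H a a) * H b b * \sum_k H a k * Num.conj (H b k).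
  rewrite mulr_sumr; apply: eq_bigr => k _; ring.
have hh' : \sum_k H a k * Num.conj (H b k) = (N%:R : R[i]) *+ (a == b).
  by rewrite -hh; apply: eq_bigr => k _; rewrite mxE.
rewrite hh'.
case: eqP => [<-|_]; last by rewrite !mulr0n mulr0.
by rewrite nconj1 ?mul1r //; exact: hH.1.1.
Qed.

Lemma sum_dl (f : 'I_N -> R[i]) a : \sum_k (a == k)%:R * f k = f a.
Proof.
rewrite (bigD1 a) //= eqxx mul1r big1 ?addr0 // => k /negPf.
by rewrite eq_sym => ->; rewrite mul0r.
Qed.

Lemma sum_dr (f : 'I_N -> R[i]) a : \sum_k f k * (a == k)%:R = f a.
Proof. by rewrite -[RHS](sum_dl f a); apply: eq_bigr => k _; rewrite mulrC. Qed.

Local Open Scope complex_scope.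
Lemma conjR (x : R) : Num.conj (x%:C) = x%:C.
Proof. by rewrite -cE conjc_real. Qed.

Definition U0 (x y : R) : 'M[R[i]]_N :=
  \matrix_(a, b) ((x%:C) * (a == b)%:R + (y%:C) * K a b).

Lemma U0_unit (x y : R) : x*x + x*y + x*y + y*y*N%:R = 1 ->
  U0 x y *m adjmx (U0 x y) = 1%:M.
Proof.
move=> hxy; apply/matrixP => a b; rewrite !mxE.
pose X : R[i] := x%:C. pose Y : R[i] := y%:C.
have -> : \sum_k U0 x y a k * adjmx (U0 x y) k b =
  \sum_k (X*X * ((a==k)%:R * (b==k)%:R) + X*Y * ((a==k)%:R * Num.conj (K b k))
      + X*Y*(K a k * (b==k)%:R) + Y*Y * (K a k * Num.conj (K b k))).
  apply: eq_bigr => k _; rewrite !mxE cE rmorphD !rmorphM /= conjC_nat !conjR.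
  rewrite /X /Y; ring.
rewrite !big_split /= -!mulr_sumr sum_dl sum_dl sum_dr KK.
have hc := congr1 (real_complex R) hxy.
rewrite !rmorphD !rmorphM /= rmorph_nat rmorph1 in hc.
case: (eqVneq a b) => [<-|nab].
  rewrite K_diag conjC1 /= !mulr1n !mulr1 /X /Y -[RHS]hc; ring.
rewrite (K_off _ _ nab) /= !mulr0n; ring.
Qed.

Lemma U0_norm (x y : R) a b : `|U0 x y a b| ^+ 2 = (if a == b then (x + y) ^+ 2 else y ^+ 2)%:C.
Proof.
rewrite normCK mxE; case: eqVneq => [<-|nab] /=.
  rewrite K_diag !mulr1 -rmorphD conjR -rmorphM expr2 //.
rewrite mulr0 add0r rmorphM /= conjR.
have -> : y%:C * K a b * (y%:C * Num.conj (K a b)) = y%:C * y%:C * (K a b * Num.conj (K a b)) by ring.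
by rewrite K_norm mulr1 -rmorphM expr2.
Qed.

Lemma U0_real (x y : R) : real_mx H -> real_mx (U0 x y).
Proof.
move=> hr a b; rewrite !mxE.
case: (hr a a) => p ->; case: (hr a b) => q ->.
exists (x * (a == b)%:R + y * (p * q)).
by rewrite conjR rmorphD !rmorphM /= rmorph_nat.
Qed.
End Core.

Section Gen.
Local Open Scope complex_scope.
Variable R : realType.
Variable N : nat.

Lemma perm_unitary (M : 'M[R[i]]_N) (s : 'S_N) :
  unitary M -> unitary (\matrix_(a, b) M (s a) b).
Proof.
rewrite /unitary => hM; apply/matrixP => a b.
have := congr1 (fun P : 'M[R[i]]_N => P (s a) (s b)) hM.
rewrite !mxE (inj_eq perm_inj) => <-; by apply: eq_bigr => k _; rewrite !mxE.
Qed.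

Lemma perm_real (M : 'M[R[i]]_N) (s : 'S_N) :
  real_mx M -> real_mx (\matrix_(a, b) M (s a) b).
Proof. by move=> hM a b; rewrite mxE. Qed.

Lemma construct (hN : (2 <= N)%N) (H : 'M[R[i]]_N) (s : 'S_N) (B : 'M[R]_N) :
  robust_hadamard H -> bistochastic B ->
  (exists alpha : R, B = alpha *: (perm_mx s : 'M[R]_N) + (1 - alpha) *: @Wmx R N) ->
  exists U : 'M[R[i]]_N, unitary U /\ (forall a b, (B a b)%:C = `|U a b| ^+ 2)
     /\ (real_mx H -> real_mx U).
Proof.
move=> hH [Bge0 _] [al hB].
set c := (1 - al) / N%:R.
have hBe a b : B a b = al * (s a == b)%:R + c by rewrite hB !mxE.
have lt0 : (0 < N)%N by apply: leq_trans hN.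
have lt1 : (1 < N)%N by [].
pose a0 : 'I_N := Ordinal lt0. pose b1 : 'I_N := Ordinal lt1.
have [b2 hb] : exists b, s a0 != b.
  case: (eqVneq (s a0) a0) => h; last by exists a0.
  by exists b1; rewrite h.
have c0 : 0 <= c by have := Bge0 a0 b2; rewrite hBe (negPf hb) mulr0 add0r.
have d0 : 0 <= al + c by have := Bge0 a0 (s a0); rewrite hBe eqxx mulr1.
pose y := Num.sqrt c. pose x := Num.sqrt (al + c) - y.
have hN0 : (N%:R : R) != 0 by rewrite pnatr_eq0 -lt0n.
have hxy : x*x + x*y + x*y + y*y*N%:R = 1.
  have -> : x*x + x*y + x*y + y*y*N%:R = Num.sqrt (al + c) ^+ 2 + Num.sqrt c ^+ 2 * (N%:R - 1).
    rewrite /x /y; ring.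
  rewrite !sqr_sqrtr // /c; field.
  by [].
exists (\matrix_(a, b) @U0 R N H x y (s a) b); split; last split.
- apply: perm_unitary; exact: (@U0_unit R N H hH x y hxy).
- move=> a b; rewrite mxE (@U0_norm R N H hH) hBe.
  case: eqP => _ /=; last by rewrite mulr0 add0r /y sqr_sqrtr.
  by rewrite mulr1 /x subrK sqr_sqrtr.
- by move=> hr; apply: perm_real; apply: (@U0_real R N H).
Qed.
End Gen.

Theorem mainTheorem3 (R : realType) (N : nat) (hN : (2 <= N)%N) :
  (exists H : 'M[R[i]]_N, robust_hadamard H) ->
  (forall (s : 'S_N) (B : 'M[R]_N),
      (in_ray s B \/ in_counter_ray s B) -> unistochastic B) /\
  ((exists H : 'M[R[i]]_N, robust_hadamard H /\ real_mx H) ->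
   forall (s : 'S_N) (B : 'M[R]_N),
      (in_ray s B \/ in_counter_ray s B) -> orthostochastic B).
Proof.
have ext : forall (s : 'S_N) (B : 'M[R]_N), (in_ray s B \/ in_counter_ray s B) ->
    bistochastic B /\ exists alpha : R, B = alpha *: (perm_mx s : 'M[R]_N) + (1 - alpha) *: @Wmx R N.
  by move=> s B [[hb [al [_ e]]]|[hb [al [_ e]]]]; split=> //; exists al.
move=> [H hH]; split.
  move=> s B /ext [hb he].
  have [U [hU [hn _]]] := @construct R N hN H s B hH hb he.
  by split=> //; exists U.
move=> [H' [hH' hr]] s B /ext [hb he].
have [U [hU [hn hreal]]] := @construct R N hN H' s B hH' hb he.
have hr' := hreal hr.
split=> //.
pose O : 'M[R]_N := \matrix_(a, b) complex.Re (U a b).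
have hO a b : U a b = ((O a b)%:C)%C by rewrite mxE; case: (hr' a b) => r ->.
exists O; split.
  apply/matrixP => a b.
  have hU1 := congr1 (fun P : 'M[R[i]]_N => P a b) hU.
  have key : (((O *m O^T) a b)%:C)%C = ((1%:M : 'M[R]_N) a b)%:C%C.
    rewrite [in RHS]mxE rmorphMn rmorph1 /=.
    have hU1' : (U *m adjmx U) a b = 1 *+ (a == b) by rewrite hU1 mxE.
    rewrite -hU1' !mxE rmorph_sum; apply: eq_bigr => k _.
    by rewrite !mxE rmorphM /= [U a k]hO [U b k]hO conjc_real !mxE.
  by case: key.
move=> a b; have := hn a b; rewrite hO normCK conjR -rmorphM.
by case=> ->; rewrite expr2.
Qed.
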